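(* Let $r,k,s$ be integers with $k+r\neq0$, $k+s\neq0$, and let $n\ge0$ be an integer. Then \[ 5F_{k+r}F_{k+s}\;\Big|\;L_{2k+r+s}^{n+1}-(-1)^{(k+s)(n+1)}L_{r-s}^{n+1}. \] In particular, $5F_{k+r}^2\mid L_{2(k+r)}^{n+1}-(-1)^{(k+r)(n+1)}2^{n+1}$.
   Context: $F_n$ and $L_n$ denote the Fibonacci and Lucas numbers, defined for all integers $n$ by $F_0=0,F_1=1$, $L_0=2,L_1=1$ and $x_n=x_{n-1}+x_{n-2}$, with $F_{-n}=(-1)^{n-1}F_n$ and $L_{-n}=(-1)^nL_n$. *)

(* Defs.v *)
From Stdlib Require Import ZArith.
Open Scope Z_scope.

Definition negpow (m : Z) : Z := if Z.even m then 1 else -1.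

Fixpoint fibn (n : nat) : Z :=
  match n with
  | O => 0
  | S m => match m with O => 1 | S p => fibn m + fibn p end
  end.

Fixpoint lucn (n : nat) : Z :=
  match n with
  | O => 2
  | S m => match m with O => 1 | S p => lucn m + lucn p end
  end.

Definition F (n : Z) : Z :=
  if 0 <=? n then fibn (Z.to_nat n) else negpow (- n - 1) * fibn (Z.to_nat (- n)).

Definition L (n : Z) : Z :=
  if 0 <=? n then lucn (Z.to_nat n) else negpow (- n) * lucn (Z.to_nat (- n)).

(* Main.v *)
Require Import Defs.
From Stdlib Require Import ZArith Lia.
Open Scope Z_scope.

Lemma negpow_S x : negpow (x + 1) = - negpow x.
Proof. unfold negpow. rewrite Z.even_add. simpl. destruct (Z.even x); reflexivity. Qed.

Lemma negpow_sq x : negpow x * negpow x = 1.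
Proof. unfold negpow. destruct (Z.even x); reflexivity. Qed.

Lemma negpow_mul b m : 0 <= m -> negpow (b * m) = negpow b ^ m.
Proof.
  intro Hm. pattern m. apply natlike_ind; [| |exact Hm].
  - rewrite Z.mul_0_r. reflexivity.
  - intros x Hx IH. rewrite <- Z.add_1_r, Z.mul_add_distr_l, Z.mul_1_r, Z.pow_add_r, Z.pow_1_r by lia.
    unfold negpow in *. rewrite Z.even_add. destruct (Z.even b), (Z.even (b*x));
    simpl in *; lia.
Qed.

Lemma F_nonneg n : 0 <= n -> F n = fibn (Z.to_nat n).
Proof. intro H. unfold F. replace (0 <=? n) with true by (symmetry; apply Z.leb_le; lia). reflexivity. Qed.
Lemma F_neg n : n < 0 -> F n = negpow (-n-1) * fibn (Z.to_nat (-n)).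
Proof. intro H. unfold F. replace (0 <=? n) with false by (symmetry; apply Z.leb_gt; lia). reflexivity. Qed.
Lemma L_nonneg n : 0 <= n -> L n = lucn (Z.to_nat n).
Proof. intro H. unfold L. replace (0 <=? n) with true by (symmetry; apply Z.leb_le; lia). reflexivity. Qed.
Lemma L_neg n : n < 0 -> L n = negpow (-n) * lucn (Z.to_nat (-n)).
Proof. intro H. unfold L. replace (0 <=? n) with false by (symmetry; apply Z.leb_gt; lia). reflexivity. Qed.

Lemma F_rec n : F (n+2) = F (n+1) + F n.
Proof.
  destruct (Z_le_gt_dec 0 n).
  - rewrite !F_nonneg by lia.
    replace (Z.to_nat (n+2)) with (S (S (Z.to_nat n))) by lia.
    replace (Z.to_nat (n+1)) with (S (Z.to_nat n)) by lia. reflexivity.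
  - destruct (Z.eq_dec n (-1)); [subst; reflexivity|].
    destruct (Z.eq_dec n (-2)); [subst; reflexivity|].
    rewrite !F_neg by lia.
    remember (-n-3) as p eqn:Hp. remember (Z.to_nat (-n-2)) as m eqn:Hm.
    replace (Z.to_nat (-n)) with (S (S m)) by lia.
    replace (Z.to_nat (-(n+1))) with (S m) by lia.
    replace (Z.to_nat (-(n+2))) with m by lia.
    replace (-n-1) with (p+1+1) by lia.
    replace (-(n+1)-1) with (p+1) by lia.
    replace (-(n+2)-1) with p by lia.
    rewrite !negpow_S. simpl. ring.
Qed.

Lemma L_rec n : L (n+2) = L (n+1) + L n.
Proof.
  destruct (Z_le_gt_dec 0 n).
  - rewrite !L_nonneg by lia.
    replace (Z.to_nat (n+2)) with (S (S (Z.to_nat n))) by lia.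
    replace (Z.to_nat (n+1)) with (S (Z.to_nat n)) by lia. reflexivity.
  - destruct (Z.eq_dec n (-1)); [subst; reflexivity|].
    destruct (Z.eq_dec n (-2)); [subst; reflexivity|].
    rewrite !L_neg by lia.
    remember (-n-2) as p eqn:Hp. remember (Z.to_nat p) as m eqn:Hm.
    replace (Z.to_nat (-n)) with (S (S m)) by lia.
    replace (Z.to_nat (-(n+1))) with (S m) by lia.
    replace (Z.to_nat (-(n+2))) with m by lia.
    replace (-n) with (p+1+1) by lia.
    replace (-(n+1)) with (p+1) by lia.
    replace (-(n+2)) with p by lia.
    rewrite !negpow_S. simpl. ring.
Qed.

Lemma Zind2 (P : Z -> Prop) : P 0 -> P 1 ->
  (forall n, P n -> P (n+1) -> P (n+2)) ->
  (forall n, P (n+1) -> P (n+2) -> P n) -> forall n, P n.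
Proof.
  intros H0 H1 Hf Hb.
  assert (forall n, P n /\ P (n+1)) as H.
  { apply Z.peano_ind.
    - split; assumption.
    - intros x [A B]. split.
      + replace (Z.succ x) with (x+1) by lia. exact B.
      + replace (Z.succ x + 1) with (x+2) by lia. apply Hf; assumption.
    - intros x [A B]. split.
      + apply Hb; replace (Z.pred x + 1) with x by lia;
        replace (Z.pred x + 2) with (x+1) by lia; assumption.
      + replace (Z.pred x + 1) with x by lia. exact A. }
  intro n. apply H.
Qed.

Ltac norm_idx x :=
  try replace (x+1-1) with x in * by lia;
  try replace (x+2-1) with (x+1) in * by lia;
  try replace (x+1+1) with (x+2) in * by lia;
  try replace (x+1+2) with (x+2+1) in * by lia;
  lia.

Lemma L_F n : L n = F (n-1) + F (n+1).
Proof.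
  pattern n. apply Zind2.
  - reflexivity.
  - reflexivity.
  - intros x A B. pose proof (L_rec x) as R. pose proof (F_rec (x-1)) as R1.
    pose proof (F_rec x) as R2. pose proof (F_rec (x+1)) as R3.
    replace (x-1+2) with (x+1) in R1 by lia. replace (x-1+1) with x in R1 by lia.
    norm_idx x.
  - intros x A B. pose proof (L_rec x) as R. pose proof (F_rec (x-1)) as R1.
    pose proof (F_rec x) as R2. pose proof (F_rec (x+1)) as R3.
    replace (x-1+2) with (x+1) in R1 by lia. replace (x-1+1) with x in R1 by lia.
    norm_idx x.
Qed.

Lemma L_opp n : L (-n) = negpow n * L n.
Proof.
  pattern n. apply Zind2.
  - reflexivity.
  - reflexivity.
  - intros x A B. pose proof (L_rec (-x-2)) as R. pose proof (L_rec x) as R2.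
    replace (-x-2+2) with (-x) in R by lia. replace (-x-2+1) with (-(x+1)) in R by lia.
    replace (-x-2) with (-(x+2)) in R by lia.
    replace (x+2) with (x+1+1) in * by lia. rewrite !negpow_S in *.
    assert (E : L (- (x + 1 + 1)) = L (-x) - L (-(x+1))) by lia. rewrite E, A, B, R2. ring.
  - intros x A B. pose proof (L_rec (-x-2)) as R. pose proof (L_rec x) as R2.
    replace (-x-2+2) with (-x) in R by lia. replace (-x-2+1) with (-(x+1)) in R by lia.
    replace (-x-2) with (-(x+2)) in R by lia.
    replace (x+2) with (x+1+1) in * by lia. rewrite !negpow_S in *. nia.
Qed.

Lemma key a b : L (a+b) - negpow b * L (a-b) = 5 * F a * F b.
Proof.
  pattern a. apply Zind2.
  - replace (0+b) with b by lia. replace (0-b) with (-b) by lia.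
    rewrite L_opp. rewrite Z.mul_assoc, negpow_sq. change (F 0) with 0. ring.
  - remember (b-1) as c eqn:Hc. replace b with (c+1) by lia.
    replace (1-(c+1)) with (-c) by lia. rewrite L_opp, negpow_S.
    replace (1+(c+1)) with (c+2) by lia.
    rewrite (L_F (c+2)), (L_F c).
    replace (c+2-1) with (c+1) by lia. replace (c+2+1) with ((c+1)+2) by lia.
    rewrite (F_rec (c+1)). replace (c+1+1) with (c+2) by lia.
    rewrite (F_rec c).
    pose proof (F_rec (c-1)) as R. replace (c-1+2) with (c+1) in R by lia.
    replace (c-1+1) with c in R by lia.
    change (F 1) with 1.
    assert (negpow c * negpow c = 1) by apply negpow_sq. rewrite Z.mul_assoc, Z.mul_opp_l, H. lia.
  - intros x A B.
    pose proof (L_rec (x+b)) as R1. pose proof (L_rec (x-b)) as R2. pose proof (F_rec x) as R3.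
    replace (x+b+2) with (x+2+b) in R1 by lia. replace (x+b+1) with (x+1+b) in R1 by lia.
    replace (x-b+2) with (x+2-b) in R2 by lia. replace (x-b+1) with (x+1-b) in R2 by lia.
    rewrite R1, R2, R3. replace (5 * (F (x + 1) + F x) * F b) with (5 * F (x+1) * F b + 5 * F x * F b) by ring. rewrite <- A, <- B. ring.
  - intros x A B.
    pose proof (L_rec (x+b)) as R1. pose proof (L_rec (x-b)) as R2. pose proof (F_rec x) as R3.
    replace (x+b+2) with (x+2+b) in R1 by lia. replace (x+b+1) with (x+1+b) in R1 by lia.
    replace (x-b+2) with (x+2-b) in R2 by lia. replace (x-b+1) with (x+1-b) in R2 by lia.
    assert (E1 : L (x+b) = L (x+2+b) - L (x+1+b)) by lia.
    assert (E2 : L (x-b) = L (x+2-b) - L (x+1-b)) by lia.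
    assert (E3 : F x = F (x+2) - F (x+1)) by lia.
    rewrite E1, E2, E3. rewrite Z.mul_sub_distr_l. 
    replace (5 * (F (x + 2) - F (x + 1)) * F b) with (5 * F (x+2) * F b - 5 * F (x+1) * F b) by ring.
    rewrite <- A, <- B. ring.
Qed.

Lemma divpow x y m : 0 <= m -> (x - y | x ^ m - y ^ m).
Proof.
  intro Hm. pattern m. apply natlike_ind; [| |exact Hm].
  - simpl. exists 0. ring.
  - intros k Hk [q Hq]. rewrite <- Z.add_1_r, !Z.pow_add_r, !Z.pow_1_r by lia.
    exists (x * q + y ^ k).
    replace (x ^ k * x - y ^ k * y) with (x * (x ^ k - y ^ k) + (x - y) * y ^ k) by ring.
    rewrite Hq. ring.
Qed.

Theorem mainTheorem12 :
  (forall r k s n : Z, k + r <> 0 -> k + s <> 0 -> 0 <= n ->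
     (5 * F (k + r) * F (k + s) |
        L (2 * k + r + s) ^ (n + 1)
        - negpow ((k + s) * (n + 1)) * L (r - s) ^ (n + 1)))
  /\
  (forall r k n : Z, k + r <> 0 -> 0 <= n ->
     (5 * F (k + r) ^ 2 |
        L (2 * (k + r)) ^ (n + 1) - negpow ((k + r) * (n + 1)) * 2 ^ (n + 1))).
Proof.
  assert (P1 : forall r k s n : Z, 0 <= n ->
     (5 * F (k + r) * F (k + s) |
        L (2 * k + r + s) ^ (n + 1)
        - negpow ((k + s) * (n + 1)) * L (r - s) ^ (n + 1))).
  { intros r k s n Hn. rewrite negpow_mul by lia. rewrite <- Z.pow_mul_l.
    rewrite <- key.
    replace (k + r + (k + s)) with (2 * k + r + s) by ring.
    replace (k + r - (k + s)) with (r - s) by ring.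
    apply divpow. lia. }
  split.
  - intros. apply P1; assumption.
  - intros r k n _ Hn. pose proof (P1 r k r n Hn) as H.
    replace (2 * k + r + r) with (2 * (k + r)) in H by ring.
    replace (r - r) with 0 in H by ring. change (L 0) with 2 in H.
    rewrite Z.pow_2_r, Z.mul_assoc. exact H.
Qed.
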